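(* In the setup of the context, let $B=(b_i)_{i=1}^n$ and $B'=(b'_i)_{i=1}^n$ be two $\ast$-symmetric bases of $H$ with $b'_i=\sum_jA_{ij}b_j$, and let $J$, $J'$ be the asymptotic algebras built from $B$ and $B'$ (bases $(t_i)$, $(t'_i)$, traces $\bar\tau,\bar\tau'$). Then $A\in O_n(\mathcal O)$, and the $F$-linear map $\alpha:J\to J'$, $\alpha(t_x):=\sum_i\bar A_{ix}t'_i$ (with $\bar A$ the reduction of $A$ modulo $\mathfrak m$) satisfies: (a) $\alpha$ is an isomorphism of $F$-algebras; (b) $\bar\tau'\circ\alpha=\bar\tau$; (c) $\alpha(u^\ast)=\alpha(u)^\ast$ for all $u\in J$.
   Context: Setup: $\Gamma$ totally ordered abelian group; $K$ field with surjective valuation $\nu$, valuation ring $\mathcal O$, maximal ideal $\mathfrak m$, formally real residue field $F$. $H$ finite-dimensional split semisimple symmetric $K$-algebra with trace form $\tau$ and $K$-linear involutive antiautomorphism $\ast$; a $\ast$-symmetric basis is a basis $B$ with $B^\ast=B$ and $\tau(bc^\ast)=\delta_{bc}$. With $\Lambda$, $\chi_\lambda$, $c_\lambda$ ($\tau=\sum c_\lambda^{-1}\chi_\lambda$), $a_\lambda=-\tfrac12\nu(c_\lambda)\in\Gamma$, a fixed homomorphism $\gamma\mapsto v^\gamma$ from $\langle a_\lambda\rangle$ to $K^\times$ with $\nu(v^\gamma)=\gamma$, $f_\lambda=v^{2a_\lambda}c_\lambda$, and balanced representations $\rho_\lambda$ (irreducible of type $\lambda$ with $\nu(\rho_\lambda(b))\ge-a_\lambda$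 on every $\ast$-symmetric basis) with leading coefficients $c^\lambda(x)=v^{a_\lambda}\rho_\lambda(x)\bmod\mathfrak m$, the asymptotic algebra of a $\ast$-symmetric basis $B$ is the $F$-algebra $J$ with basis $(t_x)_{x\in B}$, product $t_xt_y=\sum_z\gamma_{x,y,z}t_{z^\ast}$ where $\gamma_{x,y,z}=\sum_\lambda\sum_{\mathfrak{s,t,u}}f_\lambda^{-1}c^\lambda(x)_{\mathfrak{st}}c^\lambda(y)_{\mathfrak{tu}}c^\lambda(z)_{\mathfrak{us}}$, trace form $\bar\tau(t_x)=n_x:=\sum_\lambda\sum_{\mathfrak s}f_\lambda^{-1}c^\lambda(x^\ast)_{\mathfrak{ss}}$, and involution $t_x^\ast=t_{x^\ast}$. *)

(* Defs.v *)
From HB Require Import structures.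
From mathcomp Require Import all_boot all_order all_algebra all_field.
Set Implicit Arguments. Unset Strict Implicit. Unset Printing Implicit Defensive.
Import Order.TTheory GRing.Theory Num.Theory.
Local Open Scope ring_scope.

Definition ordered_group (G : porderZmodType) : Prop :=
  (forall x y : G, (x <= y) || (y <= x)) /\
  (forall x y z : G, x <= y -> x + z <= y + z).

(* ---------- valuations: nu is only meaningful on nonzero elements; nu(0) = oo ---------- *)
Section Valuation.
Variables (G : porderZmodType) (K F : fieldType) (nu : K -> G).

Definition valuation : Prop :=
  (forall x y : K, x != 0 -> y != 0 -> nu (x * y) = nu x + nu y) /\
  (forall x y : K, x != 0 -> y != 0 -> x + y != 0 ->
      (nu x <= nu (x + y)) || (nu y <= nu (x + y))) /\
  (forall g : G, exists x : K, x != 0 /\ nu x = g).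

(* "nu(x) >= g", with the convention nu(0) = +oo *)
Definition vge (x : K) (g : G) : bool := (x == 0) || (g <= nu x).
Definition inO (x : K) : bool := vge x 0.
Definition inm (x : K) : bool := (x == 0) || (0 < nu x).

(* res : K -> F restricted to O is a surjective ring morphism with kernel m,
   i.e. F is (identified with) the residue field O/m *)
Definition residue_map (res : K -> F) : Prop :=
  (forall x y, inO x -> inO y -> res (x + y) = res x + res y) /\
  (forall x y, inO x -> inO y -> res (x * y) = res x * res y) /\
  res 1 = 1 /\
  (forall x, inO x -> (res x == 0) = inm x) /\
  (forall z : F, exists x, inO x /\ res x = z).
End Valuation.

Definition formally_real (F : fieldType) : Prop :=
  forall (k : nat) (s : 'I_k -> F), \sum_(i < k) s i ^+ 2 != -1.

Section Alg.
Variables (K : fieldType) (H : falgType K).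

Definition trace_form (tau : H -> K) : Prop :=
  (forall (k : K) (x y : H), tau (k *: x + y) = k * tau x + tau y) /\
  (forall x y : H, tau (x * y) = tau (y * x)) /\
  (forall x : H, (forall y : H, tau (x * y) = 0) -> x = 0).

Definition involution (star : H -> H) : Prop :=
  (forall (k : K) (x y : H), star (k *: x + y) = k *: star x + star y) /\
  (forall x y : H, star (x * y) = star y * star x) /\
  (forall x : H, star (star x) = x).

Definition star_sym_basis (tau : H -> K) (star : H -> H) (m : nat)
    (C : m.-tuple H) : Prop :=
  basis_of fullv C /\
  (forall i : 'I_m, star (tnth C i) \in C) /\
  (forall i j : 'I_m, tau (tnth C i * star (tnth C j)) = (i == j)%:R).

Variables (L : finType) (d : L -> nat).

(* the rho l are representations, and together they give an isomorphism
   H ~= prod_l M_{d l}(K); i.e. H is split semisimple and (rho l)_l is a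
   complete list of its irreducible representations, rho l of type l. *)
Definition split_semisimple_irreps (rho : forall l : L, H -> 'M[K]_(d l)) : Prop :=
  (forall l, forall (k : K) (x y : H), rho l (k *: x + y) = k *: rho l x + rho l y) /\
  (forall l (x y : H), rho l (x * y) = rho l x *m rho l y) /\
  (forall l, rho l 1 = 1%:M) /\
  (forall x y : H, (forall l, rho l x = rho l y) -> x = y) /\
  (forall M : forall l : L, 'M[K]_(d l), exists x : H, forall l, rho l x = M l).
End Alg.

Section Balanced.
Variables (G : porderZmodType) (K F : fieldType) (H : falgType K).
Variables (L : finType) (d : L -> nat) (nu : K -> G).

Definition in_agen (a : L -> G) (g : G) : Prop :=
  exists z : L -> int, g = \sum_(l : L) a l *~ z l.

Definition vhom (a : L -> G) (v : G -> K) : Prop :=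
  (forall g h, in_agen a g -> in_agen a h -> v (g + h) = v g * v h) /\
  (forall g, in_agen a g -> v g != 0 /\ nu (v g) = g).

Definition balanced (tau : H -> K) (star : H -> H)
    (rho : forall l : L, H -> 'M[K]_(d l)) (a : L -> G) : Prop :=
  forall l (m : nat) (C : m.-tuple H), star_sym_basis tau star C ->
    forall (i : 'I_m) (s t : 'I_(d l)), vge nu (rho l (tnth C i) s t) (- a l).
End Balanced.

(* J is modelled on its coordinate space 'rV[F]_n w.r.t. the basis (t_x):
   u = \sum_x u 0 x t_x. *)
Section Asymptotic.
Variables (G : porderZmodType) (K F : fieldType) (H : falgType K).
Variables (L : finType) (d : L -> nat).
Variables (res : K -> F) (v : G -> K) (a : L -> G) (c : L -> K).
Variables (rho : forall l : L, H -> 'M[K]_(d l)) (star : H -> H).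

Definition fl (l : L) : K := v (a l *+ 2) * c l.
Definition lc (l : L) (x : H) : 'M[F]_(d l) := map_mx res (v (a l) *: rho l x).

Variables (n : nat) (B : n.-tuple H).
Definition sidx (i : 'I_n) : 'I_n :=
  odflt i [pick j : 'I_n | tnth B j == star (tnth B i)].

Definition gam (x y z : 'I_n) : F :=
  \sum_(l : L) \sum_(s < d l) \sum_(t < d l) \sum_(u < d l)
     (res (fl l))^-1 * lc l (tnth B x) s t * lc l (tnth B y) t u
       * lc l (tnth B z) u s.

(* t_x t_y = \sum_z gam x y z t_{z^*}, extended bilinearly *)
Definition Jmul (p q : 'rV[F]_n) : 'rV[F]_n :=
  \row_(k < n) \sum_(x < n) \sum_(y < n) \sum_(z < n)
     p 0 x * q 0 y * gam x y z * (sidx z == k)%:R.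

Definition nx (x : 'I_n) : F :=
  \sum_(l : L) \sum_(s < d l) (res (fl l))^-1 * lc l (tnth B (sidx x)) s s.

Definition Jtr (p : 'rV[F]_n) : F := \sum_(x < n) p 0 x * nx x.

Definition Jstar (p : 'rV[F]_n) : 'rV[F]_n :=
  \row_(k < n) \sum_(x < n) p 0 x * (sidx x == k)%:R.
End Asymptotic.

(* Main.v *)
Require Import Defs.
From HB Require Import structures.
From mathcomp Require Import all_boot all_order all_algebra all_field.
Import Order.TTheory GRing.Theory Num.Theory.
Local Open Scope ring_scope.


Section AbsF.
Set Implicit Arguments. Unset Strict Implicit.
Variables (F : fieldType) (L : finType) (d : L -> nat) (n : nat) (r : L -> F).

Definition gamA (M : forall l, 'I_n -> 'M[F]_(d l)) (x y z : 'I_n) : F :=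
  \sum_(l : L) \sum_(s < d l) \sum_(t < d l) \sum_(u < d l)
     r l * M l x s t * M l y t u * M l z u s.

Definition LC (M : forall l, 'I_n -> 'M[F]_(d l)) l (p : 'rV[F]_n) : 'M[F]_(d l) :=
  \sum_(x < n) p 0 x *: M l x.

Lemma tr3 m (X Y Z : 'M[F]_m) :
  \sum_(s < m) \sum_(t < m) \sum_(u < m) X s t * Y t u * Z u s = \tr (X *m Y *m Z).
Proof.
rewrite /mxtrace; apply eq_bigr => s _; rewrite mxE.
under [RHS]eq_bigr do rewrite mxE mulr_suml.
rewrite exchange_big; apply eq_bigr => t _; apply eq_bigr => u _.
by [].
Qed.

Lemma gamA_tr M x y z :
  gamA M x y z = \sum_l r l * \tr (M l x *m M l y *m M l z).
Proof.
apply eq_bigr => l _; rewrite -tr3 mulr_sumr; apply eq_bigr => s _.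
rewrite mulr_sumr; apply eq_bigr => t _; rewrite mulr_sumr; apply eq_bigr => u _.
by rewrite !mulrA.
Qed.

Lemma LC3 M l p q (Z : 'M[F]_(d l)) :
  LC M l p *m LC M l q *m Z =
  \sum_(x < n) \sum_(y < n) (p 0 x * q 0 y) *: (M l x *m M l y *m Z).
Proof.
rewrite /LC mulmx_suml mulmx_suml; apply eq_bigr => x _.
rewrite mulmx_sumr mulmx_suml; apply eq_bigr => y _.
by rewrite -!scalemxAl -scalemxAr -scalemxAl scalerA.
Qed.

Lemma gamA_G M (p q : 'rV[F]_n) z :
  \sum_(x < n) \sum_(y < n) p 0 x * q 0 y * gamA M x y z =
  \sum_l r l * \tr (LC M l p *m LC M l q *m M l z).
Proof.
under eq_bigr do under eq_bigr do rewrite gamA_tr mulr_sumr.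
under eq_bigr do rewrite exchange_big.
rewrite exchange_big; apply eq_bigr => l _.
rewrite LC3 linear_sum mulr_sumr; apply eq_bigr => x _.
rewrite linear_sum mulr_sumr; apply eq_bigr => y _.
by rewrite linearZ /= mulrCA.
Qed.

Lemma tr_lin m (X : 'M[F]_m) (a : 'I_n -> F) (Y : 'I_n -> 'M[F]_m) :
  \tr (X *m \sum_(j < n) a j *: Y j) = \sum_(j < n) a j * \tr (X *m Y j).
Proof.
rewrite mulmx_sumr raddf_sum; apply eq_bigr => j _.
by rewrite -scalemxAr; apply: mxtraceZ.
Qed.

Definition Pmx (sg : 'I_n -> 'I_n) : 'M[F]_n := \matrix_(x, k) (sg x == k)%:R.

Definition JmulA M (sg : 'I_n -> 'I_n) (p q : 'rV[F]_n) : 'rV[F]_n :=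
  \row_(k < n) \sum_(x < n) \sum_(y < n) \sum_(z < n)
     p 0 x * q 0 y * gamA M x y z * (sg z == k)%:R.

Definition Gm M (p q : 'rV[F]_n) : 'rV[F]_n :=
  \row_(z < n) \sum_(x < n) \sum_(y < n) p 0 x * q 0 y * gamA M x y z.

Lemma JmulA_G M sg p q : JmulA M sg p q = Gm M p q *m Pmx sg.
Proof.
apply/rowP => k; rewrite !mxE.
rewrite /Gm /Pmx; under [RHS]eq_bigr do rewrite !mxE mulr_suml.
under [RHS]eq_bigr do under eq_bigr do rewrite mulr_suml.
rewrite [RHS]exchange_big; apply eq_bigr => x _.
by rewrite [RHS]exchange_big.
Qed.

Lemma sum_delta (a : 'I_n) (f : 'I_n -> F) :
  \sum_(m < n) (a == m)%:R * f m = f a.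
Proof.
rewrite (bigD1 a) //= eqxx mul1r big1 ?addr0 // => m hm.
by rewrite eq_sym (negbTE hm) mul0r.
Qed.

Variables (Ab : 'M[F]_n) (M M' : forall l, 'I_n -> 'M[F]_(d l))
  (sg sg' : 'I_n -> 'I_n).
Hypotheses (hAA : Ab^T *m Ab = 1%:M) (hAA' : Ab *m Ab^T = 1%:M)
  (hsg : involutive sg) (hsg' : involutive sg')
  (hAs : forall k z, Ab (sg' k) z = Ab k (sg z))
  (hM' : forall l i, M' l i = \sum_(j < n) Ab i j *: M l j).

Lemma LC' l p : LC M' l p = LC M l (p *m Ab).
Proof.
rewrite /LC; under eq_bigr do rewrite hM' scaler_sumr.
rewrite exchange_big; apply eq_bigr => j _; rewrite mxE scaler_suml.
by apply eq_bigr => i _; rewrite scalerA.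
Qed.

Lemma PA : Pmx sg *m Ab^T = Ab^T *m Pmx sg'.
Proof.
apply/matrixP => x k; rewrite !mxE.
under eq_bigr do rewrite !mxE.
under [RHS]eq_bigr do rewrite !mxE.
rewrite sum_delta.
have -> : \sum_(j < n) Ab j x * (sg' j == k)%:R =
          \sum_(j < n) (sg' k == j)%:R * Ab j x.
  apply eq_bigr => j _; rewrite mulrC.
  have -> : (sg' j == k) = (sg' k == j) by apply/idP/idP => /eqP <-; rewrite hsg'.
  by [].
by rewrite (sum_delta _ (fun j => Ab j x)) hAs.
Qed.

Lemma Jmul_ok p q :
  JmulA M sg p q *m Ab^T = JmulA M' sg' (p *m Ab^T) (q *m Ab^T).
Proof.
rewrite !JmulA_G -mulmxA PA mulmxA; congr (_ *m _).
apply/rowP => z; rewrite !mxE gamA_G.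
under eq_bigr do rewrite !mxE gamA_G mulr_suml.
rewrite exchange_big; apply eq_bigr => l _.
have hp : forall u : 'rV[F]_n, u *m Ab^T *m Ab = u.
  by move=> u; rewrite -mulmxA hAA mulmx1.
rewrite !LC' !hp hM' tr_lin mulr_sumr.
apply eq_bigr => m _.
by rewrite mulrCA mulrC.
Qed.

Definition JstarA (sg : 'I_n -> 'I_n) (p : 'rV[F]_n) : 'rV[F]_n :=
  \row_(k < n) \sum_(x < n) p 0 x * (sg x == k)%:R.

Lemma JstarA_P s p : JstarA s p = p *m Pmx s.
Proof. by apply/rowP => k; rewrite !mxE; apply eq_bigr => x _; rewrite mxE. Qed.

Lemma Jstar_ok p : JstarA sg p *m Ab^T = JstarA sg' (p *m Ab^T).
Proof. by rewrite !JstarA_P -mulmxA PA mulmxA. Qed.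

Definition nxA M (sg : 'I_n -> 'I_n) (x : 'I_n) : F :=
  \sum_(l : L) \sum_(s < d l) r l * M l (sg x) s s.

Definition JtrA M sg (p : 'rV[F]_n) : F := \sum_(x < n) p 0 x * nxA M sg x.

Lemma JtrA_col (M0 : forall l, 'I_n -> 'M[F]_(d l)) s0 p : JtrA M0 s0 p = (p *m \col_j nxA M0 s0 j) 0 0.
Proof. by rewrite mxE; apply eq_bigr => x _; rewrite mxE. Qed.

Lemma nxA_tr (M0 : forall l, 'I_n -> 'M[F]_(d l)) s0 x : nxA M0 s0 x = \sum_l r l * \tr (M0 l (s0 x)).
Proof. by apply eq_bigr => l _; rewrite mulr_sumr. Qed.

Lemma nx_ok : \col_j nxA M' sg' j = Ab *m \col_j nxA M sg j.
Proof.
apply/colP => x; rewrite !mxE nxA_tr.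
under [RHS]eq_bigr do rewrite mxE nxA_tr mulr_sumr.
rewrite exchange_big; apply eq_bigr => l _.
rewrite hM' linear_sum mulr_sumr (reindex_inj (inv_inj hsg)) /=.
apply eq_bigr => j _.
by rewrite mxtraceZ hAs hsg mulrCA.
Qed.

Lemma Jtr_ok p : JtrA M' sg' (p *m Ab^T) = JtrA M sg p.
Proof. by rewrite !JtrA_col nx_ok mulmxA -(mulmxA p) hAA mulmx1. Qed.

End AbsF.
Unset Implicit Arguments. Set Strict Implicit.

Section AbsAll.
Set Implicit Arguments. Unset Strict Implicit.
Variables (F : fieldType) (L : finType) (d : L -> nat) (n : nat) (r : L -> F).
Variables (Ab : 'M[F]_n) (M M' : forall l, 'I_n -> 'M[F]_(d l))
  (sg sg' : 'I_n -> 'I_n).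
Hypotheses (hAA : Ab^T *m Ab = 1%:M) (hAA' : Ab *m Ab^T = 1%:M)
  (hsg : involutive sg) (hsg' : involutive sg')
  (hAs : forall k z, Ab (sg' k) z = Ab k (sg z))
  (hM' : forall l i, M' l i = \sum_(j < n) Ab i j *: M l j).
Lemma abs_all :
  (forall p q, JmulA r M sg p q *m Ab^T = JmulA r M' sg' (p *m Ab^T) (q *m Ab^T)) /\
  (forall u, JtrA r M' sg' (u *m Ab^T) = JtrA r M sg u) /\
  (forall u, JstarA sg u *m Ab^T = JstarA sg' (u *m Ab^T)).
Proof using hAA hAA' hsg hsg' hAs hM'.
split; [|split].
- by move=> p q; apply: Jmul_ok.
- by move=> u; apply: Jtr_ok.
- by move=> u; apply: Jstar_ok.
Qed.
End AbsAll.
Unset Implicit Arguments. Set Strict Implicit.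

Section Lin.
Set Implicit Arguments. Unset Strict Implicit.
Variables (K : fieldType) (V W : lmodType K) (f : V -> W).
Hypothesis hf : forall k x y, f (k *: x + y) = k *: f x + f y.
Lemma lin0 : f 0 = 0.
Proof.
have h := hf 1 0 0; rewrite scaler0 addr0 scale1r in h.
by move/(congr1 (fun t => t - f 0)): h; rewrite addrK subrr.
Qed.
Lemma linZ k x : f (k *: x) = k *: f x.
Proof. by have := hf k x 0; rewrite !addr0 lin0 addr0. Qed.
Lemma linD x y : f (x + y) = f x + f y.
Proof. by have := hf 1 x y; rewrite !scale1r. Qed.
Lemma lin_sum (I : Type) (s : seq I) (P : pred I) (g : I -> V) :
  f (\sum_(i <- s | P i) g i) = \sum_(i <- s | P i) f (g i).
Proof. exact: (big_morph f linD lin0). Qed.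
End Lin.
Unset Implicit Arguments. Set Strict Implicit.

Section Val.
Set Implicit Arguments. Unset Strict Implicit.
Variables (G : porderZmodType) (K : fieldType) (nu : K -> G).
Hypotheses (hG : ordered_group G) (hnu : valuation nu).

Lemma leD (g g' h h' : G) : (g <= g')%O -> (h <= h')%O -> (g + h <= g' + h')%O.
Proof.
move=> h1 h2; apply: (le_trans (hG.2 _ _ h h1)).
by rewrite (addrC g') (addrC g'); apply: hG.2.
Qed.

Lemma vge_add x y g : vge nu x g -> vge nu y g -> vge nu (x + y) g.
Proof.
move=> h1 h2.
case: (eqVneq x 0) h1 => [-> _|hx]; first by rewrite add0r.
case: (eqVneq y 0) h2 => [-> _|hy]; first by rewrite addr0.
rewrite /vge (negbTE hx) (negbTE hy) /= => h2 h1.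
case: (eqVneq (x + y) 0) => //= hxy.
by case/orP: (hnu.2.1 _ _ hx hy hxy) => h; apply: le_trans h.
Qed.

Lemma vge_sum (I : Type) (s : seq I) (P : pred I) (g : I -> K) t :
  (forall i, P i -> vge nu (g i) t) -> vge nu (\sum_(i <- s | P i) g i) t.
Proof.
move=> h; apply: (big_ind (fun x => vge nu x t)) => //.
- by rewrite /vge eqxx.
- by move=> x y; apply: vge_add.
Qed.

Lemma vge_mul x y g h : vge nu x g -> vge nu y h -> vge nu (x * y) (g + h).
Proof.
move=> h1 h2.
case: (eqVneq x 0) h1 => [-> _|hx]; first by rewrite /vge mul0r eqxx.
case: (eqVneq y 0) h2 => [-> _|hy]; first by rewrite /vge mulr0 eqxx.
rewrite /vge (negbTE hx) (negbTE hy) /= => h2 h1.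
by rewrite mulf_eq0 (negbTE hx) (negbTE hy) /= hnu.1 //; apply: leD.
Qed.

Lemma nu1 : nu 1 = 0.
Proof.
have h := hnu.1 1 1 (oner_neq0 _) (oner_neq0 _); rewrite mulr1 in h.
by move/(congr1 (fun t => t - nu 1)): h; rewrite addrK subrr.
Qed.

Lemma nuV x : x != 0 -> nu x^-1 = - nu x.
Proof.
move=> hx; apply/esym/addr0_eq; rewrite -hnu.1 ?invr_eq0 // mulfV //; exact: nu1.
Qed.

Lemma vge_nu x : x != 0 -> vge nu x (nu x).
Proof. by move=> hx; rewrite /vge lexx orbT. Qed.
End Val.
Unset Implicit Arguments. Set Strict Implicit.

Section Main.
Variables (G : porderZmodType) (K F : fieldType) (H : falgType K)
  (L : finType) (d : L -> nat)
  (nu : K -> G) (res : K -> F) (tau : H -> K) (star : H -> H)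
  (rho : forall l : L, H -> 'M[K]_(d l)) (c : L -> K) (a : L -> G) (v : G -> K)
  (n : nat) (B B' : n.-tuple H) (A : 'M[K]_n).
Hypotheses (hG : ordered_group G) (hnu : valuation nu) (hres : residue_map nu res)
  (hFr : formally_real F)
  (htau : trace_form tau) (hstar : involution star)
  (hrho : split_semisimple_irreps rho)
  (hd : forall l, (0 < d l)%N)
  (hc : forall l, c l != 0)
  (htauE : forall h : H, tau h = \sum_(l : L) (c l)^-1 * \tr (rho l h))
  (ha : forall l, a l *+ 2 = - nu (c l))
  (hv : vhom nu a v)
  (hbal : balanced nu tau star rho a)
  (hB : star_sym_basis tau star B) (hB' : star_sym_basis tau star B')
  (hA : forall i : 'I_n, tnth B' i = \sum_(j < n) A i j *: tnth B j).

Lemma inO0 : inO nu 0.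
Proof. by rewrite /inO /vge eqxx. Qed.
Lemma inOD x y : inO nu x -> inO nu y -> inO nu (x + y).
Proof. exact: vge_add. Qed.
Lemma inOM x y : inO nu x -> inO nu y -> inO nu (x * y).
Proof. by move=> hx hy; have := vge_mul hG hnu hx hy; rewrite addr0. Qed.
Lemma res0 : res 0 = 0.
Proof.
have h := hres.1 0 0 inO0 inO0; rewrite addr0 in h.
by move/(congr1 (fun t => t - res 0)): h; rewrite addrK subrr.
Qed.
Lemma res_sum (I : Type) (s : seq I) (P : pred I) (g : I -> K) :
  (forall i, P i -> inO nu (g i)) ->
  res (\sum_(i <- s | P i) g i) = \sum_(i <- s | P i) res (g i).
Proof.
move=> h.
suff : inO nu (\sum_(i <- s | P i) g i) /\
       res (\sum_(i <- s | P i) g i) = \sum_(i <- s | P i) res (g i) by case.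
apply: (big_rec2 (fun x y => inO nu x /\ res x = y)); first by rewrite inO0 res0.
move=> i y1 y2 Pi [h1 <-]; split; first by apply: inOD => //; apply: h.
by rewrite hres.1 //; apply: h.
Qed.

Lemma sum_delta' (f : 'I_n -> K) j : \sum_(m < n) f m * (m == j)%:R = f j.
Proof.
rewrite (bigD1 j) //= eqxx mulr1 big1 ?addr0 // => m hm.
by rewrite (negbTE hm) mulr0.
Qed.

Section Basis.
Variable C : n.-tuple H.
Hypothesis hC : star_sym_basis tau star C.

Lemma Cfree : free C.
Proof. exact: basis_free hC.1. Qed.

Lemma coordC i j : coord C j (tnth C i) = (i == j)%:R.
Proof. by rewrite (tnth_nth 0) coord_free // Cfree. Qed.

Lemma coordCsum (k : 'I_n -> K) j : coord C j (\sum_(i < n) k i *: tnth C i) = k j.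
Proof.
under eq_bigr do rewrite (tnth_nth 0).
by rewrite coord_sum_free // Cfree.
Qed.

Lemma tnthC_inj : injective (tnth C).
Proof.
move=> i j h; apply/eqP; have := coordC i j; rewrite h coordC eqxx.
by case: (i == j) => //=; rewrite mulr1n mulr0n => /eqP; rewrite oner_eq0.
Qed.

Lemma sidxP i : tnth C (sidx star C i) = star (tnth C i).
Proof.
rewrite /sidx; case: pickP => [j /eqP //|h].
have := hC.2.1 i; case/tnthP => j hj.
by have := h j; rewrite hj eqxx.
Qed.

Lemma sidx_inv : involutive (sidx star C).
Proof.
move=> i; apply: tnthC_inj.
by rewrite !sidxP hstar.2.2.
Qed.

Lemma sidx_inj : injective (sidx star C).
Proof. exact: inv_inj sidx_inv. Qed.
End Basis.

Lemma star_sum (k : 'I_n -> K) (x : 'I_n -> H) :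
  star (\sum_(j < n) k j *: x j) = \sum_(j < n) k j *: star (x j).
Proof. by rewrite (lin_sum hstar.1); apply eq_bigr => j _; rewrite (linZ hstar.1). Qed.

Lemma tau_sum (I : Type) (s : seq I) (P : pred I) (g : I -> H) :
  tau (\sum_(i <- s | P i) g i) = \sum_(i <- s | P i) tau (g i).
Proof. exact: (lin_sum (W:=K^o) htau.1). Qed.

Lemma tauZ k x : tau (k *: x) = k * tau x.
Proof. exact: (linZ (W:=K^o) htau.1). Qed.

Lemma tauB'x (y : H) i : tau (tnth B' i * y) = \sum_(m < n) A i m * tau (tnth B m * y).
Proof.
rewrite hA mulr_suml tau_sum; apply eq_bigr => m _.
by rewrite -scalerAl tauZ.
Qed.

Lemma Aentry i j : A i j = tau (tnth B' i * star (tnth B j)).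
Proof.
rewrite tauB'x; under eq_bigr do rewrite hB.2.2.
by rewrite sum_delta'.
Qed.

Lemma AAt : A *m A^T = 1%:M.
Proof.
apply/matrixP => i j; rewrite !mxE -hB'.2.2 (hA j) star_sum mulr_sumr tau_sum.
apply eq_bigr => k _; rewrite mxE -scalerAr tauZ -Aentry mulrC.
by [].
Qed.

Lemma vge_trace m (X Y : 'M[K]_m) g h :
  (forall s t, vge nu (X s t) g) -> (forall s t, vge nu (Y s t) h) ->
  vge nu (\tr (X *m Y)) (g + h).
Proof.
move=> hX hY; apply: (vge_sum hnu) => s _; rewrite mxE.
by apply: (vge_sum hnu) => t _; apply: (vge_mul hG hnu).
Qed.

Lemma A_O i j : inO nu (A i j).
Proof.
rewrite /inO Aentry htauE; apply: (vge_sum hnu) => l _.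
rewrite hrho.2.1 -(sidxP B hB).
have h1 : vge nu (c l)^-1 (a l *+ 2) by rewrite ha -(nuV hnu) //; apply: (vge_nu nu); rewrite invr_eq0.
have h2 := @vge_trace _ _ _ _ _ (hbal l _ _ hB' i) (hbal l _ _ hB (sidx star B j)).
have := vge_mul hG hnu h1 h2.
by rewrite mulr2n addrACA !subrr addr0.
Qed.

Lemma agen_a l : in_agen a (a l).
Proof.
exists (fun l' => (l' == l)%:R).
rewrite (bigD1 l) //= eqxx mulr1z big1 ?addr0 // => l' hl.
by rewrite (negbTE hl) mulr0z.
Qed.

Lemma vrho_O l (C : n.-tuple H) (hC : star_sym_basis tau star C) i s t :
  inO nu (v (a l) * rho l (tnth C i) s t).
Proof.
have [hv0 hnv] := hv.2 _ (agen_a l).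
have h1 : vge nu (v (a l)) (a l) by rewrite -{2}hnv; apply: (vge_nu nu).
have := vge_mul hG hnu h1 (hbal l _ _ hC i s t).
by rewrite subrr.
Qed.

Lemma lc_rel l i :
  lc res v a rho l (tnth B' i) = \sum_(j < n) res (A i j) *: lc res v a rho l (tnth B j).
Proof.
apply/matrixP => s t; rewrite summxE.
under [RHS]eq_bigr do rewrite !mxE.
rewrite !mxE hA (lin_sum (hrho.1 l)) summxE mulr_sumr res_sum.
- apply eq_bigr => j _.
  by rewrite (linZ (hrho.1 l)) mxE mulrCA (hres.2.1 (A i j)) //; [apply: A_O | exact: (vrho_O _ _ hB)].
- move=> j _; rewrite (linZ (hrho.1 l)) mxE mulrCA.
  by apply: inOM; [apply: A_O | exact: (vrho_O _ _ hB)].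
Qed.

Lemma main_ok :
  let alpha := fun u : 'rV[F]_n => u *m (map_mx res A)^T in
  ((A *m A^T = 1%:M) /\ (forall i j, inO nu (A i j))) /\
  (bijective alpha /\
   forall u w : 'rV[F]_n,
     alpha (Jmul res v a c rho star B u w) = Jmul res v a c rho star B' (alpha u) (alpha w)) /\
  (forall u : 'rV[F]_n,
     Jtr res v a c rho star B' (alpha u) = Jtr res v a c rho star B u) /\
  (forall u : 'rV[F]_n,
     alpha (Jstar star B u) = Jstar star B' (alpha u)).
Proof using hG hnu hres hFr htau hstar hrho hd hc htauE ha hv hbal hB hB' hA.
move=> alpha.
pose Ab := map_mx res A.
have hAAt : Ab *m Ab^T = 1%:M.
  apply/matrixP => i j.
  transitivity (res ((A *m A^T) i j)).
    rewrite !mxE res_sum; last by move=> k _; rewrite mxE; apply: inOM; apply: A_O.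
    by apply eq_bigr => k _; rewrite !mxE hres.2.1 //; apply: A_O.
  rewrite AAt !mxE; case: (i == j); [exact: hres.2.2.1 | exact: res0].
have hAtA : Ab^T *m Ab = 1%:M := mulmx1C hAAt.
pose sg := sidx star B; pose sg' := sidx star B'.
have hsg : involutive sg := sidx_inv B hB.
have hsg' : involutive sg' := sidx_inv B' hB'.
have key : forall i j, A (sg' i) (sg j) = A i j.
  move=> i j.
  have e : tnth B' (sg' i) = \sum_(m < n) A i (sg m) *: tnth B m.
    rewrite (sidxP B' hB') (hA i) star_sum (reindex_inj (sidx_inj B hB)) /=.
    apply eq_bigr => m _; rewrite -(sidxP B hB).
    by rewrite -/sg hsg.
  have := coordCsum B hB (fun m => A (sg' i) m) (sg j).
  rewrite /= -(hA (sg' i)) e (coordCsum B hB (fun m => A i (sg m))) hsg.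
  by [].
have hAs : forall k z, Ab (sg' k) z = Ab k (sg z).
  by move=> k z; rewrite !mxE -{1}(hsg z) key.
have hM' : forall l i, lc res v a rho l (tnth B' i) =
    \sum_(j < n) Ab i j *: lc res v a rho l (tnth B j).
  by move=> l i; rewrite lc_rel; apply eq_bigr => j _; rewrite mxE.
have HA := abs_all (fun l => (res (fl v a c l))^-1) hAtA hAAt hsg hsg' hAs hM'.
split; first by split; [exact: AAt | exact: A_O].
split.
  split.
    exists (fun u => u *m Ab) => u; rewrite /alpha -mulmxA.
      by rewrite hAtA mulmx1.
    by rewrite hAAt mulmx1.
  by move=> u w; exact: HA.1 u w.
split; first by move=> u; exact: HA.2.1 u.
by move=> u; exact: HA.2.2 u.
Qed.
End Main.

Theorem lemma2p2p6 (G : porderZmodType) (K F : fieldType) (H : falgType K)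
  (L : finType) (d : L -> nat)
  (nu : K -> G) (res : K -> F) (tau : H -> K) (star : H -> H)
  (rho : forall l : L, H -> 'M[K]_(d l)) (c : L -> K) (a : L -> G) (v : G -> K)
  (n : nat) (B B' : n.-tuple H) (A : 'M[K]_n) :
  ordered_group G -> valuation nu -> residue_map nu res -> formally_real F ->
  trace_form tau -> involution star -> split_semisimple_irreps rho ->
  (forall l, (0 < d l)%N) ->
  (forall l, c l != 0) ->
  (forall h : H, tau h = \sum_(l : L) (c l)^-1 * \tr (rho l h)) ->
  (forall l, a l *+ 2 = - nu (c l)) ->
  vhom nu a v ->
  balanced nu tau star rho a ->
  star_sym_basis tau star B -> star_sym_basis tau star B' ->
  (forall i : 'I_n, tnth B' i = \sum_(j < n) A i j *: tnth B j) ->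
  let alpha := fun u : 'rV[F]_n => u *m (map_mx res A)^T in
  ((A *m A^T = 1%:M) /\ (forall i j, inO nu (A i j))) /\
  (bijective alpha /\
   forall u w : 'rV[F]_n,
     alpha (Jmul res v a c rho star B u w) = Jmul res v a c rho star B' (alpha u) (alpha w)) /\
  (forall u : 'rV[F]_n,
     Jtr res v a c rho star B' (alpha u) = Jtr res v a c rho star B u) /\
  (forall u : 'rV[F]_n,
     alpha (Jstar star B u) = Jstar star B' (alpha u)).
Proof. exact: main_ok. Qed.
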